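(* Let $n\ge 0$ and $\alpha\ge 1$ be integers, $N=2^{n+1}$, $c=2^{\alpha}+1$, and consider the 1D-Tree and the $c$-DAG over the uniform dataset $\mathcal{D}=\{0,\dots,N-1\}$ (as described in the context). For $s=1$, \[ \mathbb{E}_{\mathcal{I}_1}\left[\frac{FP_{\mathrm{Tree}}(Q)}{FP_{c\text{-DAG}}(Q)}\right]=1, \] and for every real $s$ with $1<s\le N$, \[ \mathbb{E}_{\mathcal{I}_s}\left[\frac{FP_{\mathrm{Tree}}(Q)}{FP_{c\text{-DAG}}(Q)}\right]\ \ge\ \max\left\{1,\ \frac12\left\lfloor\log_2\frac{N}{s}\right\rfloor\right\}. \]
   Context: The 1D-Tree over $\mathcal{D}=\{0,\dots,N-1\}\subset[0,N)$ has levels $\ell=0,\dots,n+1$; its level-$\ell$ nodes are the intervals $[m2^{n-\ell+1},(m+1)2^{n-\ell+1})$, $m=0,\dots,2^\ell-1$. The $c$-DAG over $\mathcal{D}$ has levels $\ell=0,\dots,n+1$; with $u_\ell=2^{n-\ell+1}/(c-1)$, its level-$\ell$ nodes are the intervals $[mu_\ell,\,mu_\ell+2^{n-\ell+1})$, $m=0,1,\dots,(c-1)2^\ell-(c-1)$ (a node $[a,a+L)$ has children $[a+jL/(2(c-1)),\,a+jL/(2(c-1))+L/2)$, $j=0,\dots,c-1$). For a query $Q$, SRC-search on a structure returns a node $v$ of the deepest level whose interval contains $Q$. The competitive false-positive ratio is $\frac{FP_{\mathrm{Tree}}(Q)}{FP_{c\text{-DAG}}(Q)}=\frac{|\mathcal{D}\cap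 \mathrm{range}_v|}{|\mathcal{D}\cap\mathrm{range}_w|}$, where $v$ is the node returned on the 1D-Tree and $w$ the node returned on the $c$-DAG (all nodes of a given level contain the same number of data points). For query length $s$, $\mathcal{I}_s$ is the distribution of $Q=[x,x+s)$ with $x$ uniform on $[0,N-s]$ (for $s=N$, $x=0$); for $s=1$ queries are single data points, i.e. $x$ uniform on the integers $\{0,\dots,N-1\}$. *)

(* Defs.v *)
From HB Require Import structures.
From mathcomp Require Import all_boot all_order all_algebra.
From mathcomp Require Import all_classical all_reals all_analysis.
Set Implicit Arguments. Unset Strict Implicit. Unset Printing Implicit Defensive.
Import Order.TTheory GRing.Theory Num.Theory.
Local Open Scope ring_scope.

Definition Npts (n : nat) : nat := (2 ^ n.+1)%N.

Definition lvl_len (n l : nat) : nat := (2 ^ (n.+1 - l))%N.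

Definition data_in {R : realType} (n : nat) (a L : R) : nat :=
  #|[set i : 'I_(Npts n) | (a <= (i : nat)%:R) && ((i : nat)%:R < a + L)]|.

Definition contains {R : realType} (a L x s : R) : bool :=
  (a <= x) && (x + s <= a + L).

(* level-l node m (m < 2^l): [m 2^(n-l+1), (m+1) 2^(n-l+1)) *)
Definition tree_start {R : realType} (n l m : nat) : R := (m * lvl_len n l)%:R.

Definition tree_hit {R : realType} (n l : nat) (x s : R) : bool :=
  [exists m : 'I_(2 ^ l), contains (@tree_start R n l m) (lvl_len n l)%:R x s].

Definition tree_depth {R : realType} (n : nat) (x s : R) : nat :=
  (\max_(l < n.+2 | tree_hit n l x s) (l : nat))%N.

(* FP_Tree(Q) = |D ∩ range_v| for the node v returned by SRC-search *)
Definition FP_tree {R : realType} (n : nat) (x s : R) : nat :=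
  let d := tree_depth n x s in
  match [pick m : 'I_(2 ^ d) | contains (@tree_start R n d m) (lvl_len n d)%:R x s] with
  | Some m => data_in n (@tree_start R n d m) (lvl_len n d)%:R
  | None => 0%N
  end.

(* level-l nodes [m u_l, m u_l + 2^(n-l+1)), u_l = 2^(n-l+1)/(c-1),
   m = 0, 1, ..., (c-1)2^l - (c-1). *)
Definition dag_count (c l : nat) : nat := ((c - 1) * 2 ^ l - (c - 1)).+1.

Definition dag_start {R : realType} (n c l m : nat) : R :=
  m%:R * ((lvl_len n l)%:R / (c - 1)%:R).

Definition dag_hit {R : realType} (n c l : nat) (x s : R) : bool :=
  [exists m : 'I_(dag_count c l), contains (@dag_start R n c l m) (lvl_len n l)%:R x s].

Definition dag_depth {R : realType} (n c : nat) (x s : R) : nat :=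
  (\max_(l < n.+2 | dag_hit n c l x s) (l : nat))%N.

Definition FP_dag {R : realType} (n c : nat) (x s : R) : nat :=
  let d := dag_depth n c x s in
  match [pick m : 'I_(dag_count c d) | contains (@dag_start R n c d m) (lvl_len n d)%:R x s] with
  | Some m => data_in n (@dag_start R n c d m) (lvl_len n d)%:R
  | None => 0%N
  end.

Definition fp_ratio {R : realType} (n c : nat) (x s : R) : R :=
  (FP_tree n x s)%:R / (FP_dag n c x s)%:R.

(* E_{I_1}: x uniform on the integers {0,...,N-1}, Q = [x, x+1) *)
Definition expect_I1 {R : realType} (n c : nat) : R :=
  ((Npts n)%:R)^-1 * \sum_(i < Npts n) fp_ratio n c ((i : nat)%:R : R) 1.

(* E_{I_s} for 1 < s <= N: x uniform on [0, N-s] (x = 0 when s = N). *)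
Local Open Scope ereal_scope.
Definition expect_Is {R : realType} (n c : nat) (s : R) : \bar R :=
  if s == (Npts n)%:R then (fp_ratio n c 0 s)%:E
  else (((Npts n)%:R - s)^-1)%:E *
       \int[@lebesgue_measure R]_(x in `[0%R, ((Npts n)%:R - s)%R]%classic)
          (fp_ratio n c x s)%:E.

(* Main.v *)
Require Import Defs.
From HB Require Import structures.
From mathcomp Require Import all_boot all_order all_algebra.
From mathcomp Require Import all_classical all_reals all_analysis.
From mathcomp Require Import measurable_realfun.
From mathcomp Require Import zify ring lra.
Import Order.TTheory GRing.Theory Num.Theory.
Local Open Scope classical_set_scope.
Local Open Scope ring_scope.

Lemma le_int_nm (R : realType) (D : set R) (f g : R -> \bar R) :
  (forall x, D x -> (0 <= f x)%E) -> (forall x, D x -> (f x <= g x)%E) ->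
  (\int[@lebesgue_measure R]_(x in D) f x <= \int[@lebesgue_measure R]_(x in D) g x)%E.
Proof.
move=> f0 fg; rewrite integral_mkcond [X in (_ <= X)%E]integral_mkcond.
have g0 : forall x, D x -> (0 <= g x)%E by move=> x Dx; exact: le_trans (f0 x Dx) (fg x Dx).
rewrite !ge0_integralTE; [|exact: erestrict_ge0|exact: erestrict_ge0].
apply: ereal_sup_le => _ [h hf <-]; exists h => //= x.
exact: le_trans (hf x) (lee_restrict fg x).
Qed.

Lemma data_in_len (R : realType) n (a : R) (L : nat) :
  0 <= a -> a + L%:R <= (Npts n)%:R -> data_in n a L%:R = L.
Proof.
move=> a0 aL.
have c0 : (0 <= Num.ceil a)%R by rewrite ceil_ge0; lra.
set c := `|Num.ceil a|%N.
have cE : (c%:Z = Num.ceil a) by rewrite /c gez0_abs.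
have key1 : forall i : nat, (a <= i%:R) = (c <= i)%N.
  move=> i; rewrite -[i%:R]/((i%:Z)%:~R) -ceil_le_int -cE; lia.
have key2 : forall i : nat, (i%:R < a + L%:R) = (i < c + L)%N.
  move=> i; apply/idP/idP => H.
  - have : ~~ (a <= (i%:Z - L%:Z)%:~R).
      by rewrite -ltNge rmorphB /=; lra.
    rewrite -ceil_le_int -cE; lia.
  - have : ~~ (Num.ceil a <= (i%:Z - L%:Z)) by rewrite -cE; lia.
    rewrite ceil_le_int -ltNge rmorphB /=; lra.
have cN : (c + L <= Npts n)%N.
  have LN : (L <= Npts n)%N by rewrite -(ler_nat R); lra.
  have : Num.ceil a <= (Npts n - L)%:Z.
    by rewrite ceil_le_int -[((Npts n - L)%:Z)%:~R]/((Npts n - L)%:R) natrB //; lra.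
  rewrite -cE; lia.
rewrite /data_in.
transitivity (#|[set i : 'I_(Npts n) | (c <= i < c + L)%N]%SET|).
  by apply: eq_card => i; rewrite !inE key1 key2.
rewrite cardsE -sum1_card big_mkcond /=.
rewrite -(big_mkord xpredT (fun i => if (c <= i < c + L)%N then 1%N else 0%N)).
rewrite (@big_cat_nat _ _ _ c 0 (Npts n)) //=; try lia.
rewrite (@big_cat_nat _ _ _ (c+L) c (Npts n)) //=; try lia.
rewrite big1_seq; last by move=> i /andP[_]; rewrite mem_index_iota => /andP[h1 h2]; case: ifP => // /andP[]; lia.
rewrite [X in (_ + (_ + X))%N]big1_seq; last by move=> i /andP[_]; rewrite mem_index_iota => /andP[h1 h2]; case: ifP => // /andP[]; lia.
rewrite (eq_big_seq (fun=> 1%N)); last by move=> i; rewrite mem_index_iota => /andP[h1 h2]; case: ifP => //; move/negbT; rewrite negb_and -!ltnNge; lia.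
by rewrite sum_nat_const_nat; lia.
Qed.

Section I.
Variable R : realType.
Local Notation mu := (@lebesgue_measure R).

Lemma mu_oo (a b : R) : a <= b -> mu `]a, b[%classic = (b - a)%:E.
Proof.
move=> ab; rewrite lebesgue_measure_itv /= lte_fin.
move: ab; rewrite le_eqVlt => /orP[/eqP ->|ab']; first by rewrite ltxx subrr.
by rewrite ab' EFinB.
Qed.

Lemma mu_cc (a b : R) : a <= b -> mu `[a, b]%classic = (b - a)%:E.
Proof.
move=> ab; rewrite lebesgue_measure_itv /= lte_fin.
move: ab; rewrite le_eqVlt => /orP[/eqP ->|ab']; first by rewrite ltxx subrr.
by rewrite ab' EFinB.
Qed.

Lemma int_wind (D A : set R) (w : R) : measurable D -> measurable A -> A `<=` D -> 0 <= w ->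
  (\int[mu]_(x in D) (w * \1_A x)%:E = w%:E * mu A)%E.
Proof.
move=> mD mA AD w0.
rewrite (@integralZl_indic _ _ _ mu D mD (fun _ => A) w) //; last by move=> /lt_le_trans /(_ w0); rewrite ltxx.
by rewrite integral_indic // setIidl.
Qed.

Lemma int_term (D A B : set R) (w : R) : measurable D -> measurable A -> measurable B ->
  A `<=` D -> B `<=` D -> 0 <= w ->
  (\int[mu]_(x in D) (w * \1_A x + w * \1_B x)%:E = w%:E * mu A + w%:E * mu B)%E.
Proof.
move=> mD mA mB AD BD w0.
under eq_integral do rewrite EFinD.
rewrite ge0_integralD //; last 4 first.
- by move=> x _; rewrite lee_fin mulr_ge0.
- apply/measurable_EFinP; apply: measurable_funM; first exact: measurable_cst.
  apply: measurable_funS (subsetT _) _ => //; exact/measurable_indicP.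
- by move=> x _; rewrite lee_fin mulr_ge0.
- apply/measurable_EFinP; apply: measurable_funM; first exact: measurable_cst.
  apply: measurable_funS (subsetT _) _ => //; exact/measurable_indicP.
by rewrite !int_wind.
Qed.

Definition bpt n j q : R := ((2 * q + 1) * 2 ^ (n - j))%:R.
Definition wt k j : R := (2 ^ (k - 1 - j))%:R.
Definition Us (s b : R) : set R := `]b - s, b[%classic.
Definition Vs (s hh b : R) : set R := `[b - hh, b + hh - s]%classic.
Definition Tt n k s j q (x : R) :=
  wt k j * \1_(Us s (bpt n j q)) x + wt k j * \1_(Vs s (2 ^ (n - k))%:R (bpt n j q)) x.
Definition gf n k s (x : R) := \sum_(0 <= j < k) \sum_(0 <= q < 2 ^ j) Tt n k s j q x.

Lemma bpt_bounds n k j q : (j < k)%N -> (k <= n)%N -> (q < 2 ^ j)%N ->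
  (lvl_len n k <= (2 * q + 1) * 2 ^ (n - j))%N /\
  ((2 * q + 1) * 2 ^ (n - j) + lvl_len n k <= Npts n)%N.
Proof.
move=> jk kn qj.
have e1 : (lvl_len n k <= 2 ^ (n - j))%N by rewrite /lvl_len leq_pexp2l //; lia.
have e2 : (2 ^ j.+1 * 2 ^ (n - j) = Npts n)%N by rewrite /Npts -expnD; f_equal; lia.
rewrite expnS in e2; split; nia.
Qed.

Lemma Us_sub n k s j q : (j < k)%N -> (k <= n)%N -> (q < 2 ^ j)%N -> 0 <= s ->
  s <= (lvl_len n k)%:R ->
  Us s (bpt n j q) `<=` `[0, (Npts n)%:R - s]%classic.
Proof.
move=> jk kn qj s0 sL x; rewrite /Us /bpt /= !in_itv /= => /andP[h1 h2].
have [b1 b2] := @bpt_bounds n k j q jk kn qj.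
move: b1 b2; rewrite -(ler_nat R) -[(_ <= Npts n)%N](ler_nat R) natrD => b1 b2.
apply/andP; split; lra.
Qed.

Lemma Vs_sub n k s j q : (j < k)%N -> (k <= n)%N -> (q < 2 ^ j)%N ->
  (2 ^ (n - k))%:R < s -> Vs s (2 ^ (n - k))%:R (bpt n j q) `<=` Us s (bpt n j q).
Proof.
move=> jk kn qj hs x; rewrite /Us /Vs /= !in_itv /= => /andP[h1 h2].
apply/andP; split; lra.
Qed.

Lemma lvl_len_k n k : (k <= n)%N -> lvl_len n k = (2 * 2 ^ (n - k))%N.
Proof. by move=> kn; rewrite /lvl_len -expnS; f_equal; lia. Qed.

Lemma int_gf n k (s : R) : (1 <= k)%N -> (k <= n)%N -> 0 < s -> s <= (lvl_len n k)%:R -> (2 ^ (n - k))%:R < s ->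
  (\int[mu]_(x in `[0%R, ((Npts n)%:R - s)%R]%classic) (gf n k s x)%:E = (k%:R * (2 ^ n)%:R)%:E)%E.
Proof.
move=> k1 kn s0 sL hs.
set D := `[0, (Npts n)%:R - s]%classic.
have mD : measurable D by exact: measurable_itv.
have mT : forall j q, measurable_fun D ((fun x => (Tt n k s j q x)%:E) : R -> \bar R).
  move=> j q; apply/measurable_EFinP; apply: measurable_funD;
   (apply: measurable_funM; first exact: measurable_cst);
   (apply: measurable_funS (subsetT _) _ => //; apply/measurable_indicP; exact: measurable_itv).
have T0 : forall j q x, (0 <= (Tt n k s j q x)%:E)%E.
  by move=> j q x; rewrite lee_fin /Tt addr_ge0 // mulr_ge0.
have -> : (fun x => (gf n k s x)%:E) = (fun x => \sum_(0 <= j < k) \sum_(0 <= q < 2 ^ j) (Tt n k s j q x)%:E)%E.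
  by apply: funext => x; rewrite /gf -sumEFin; apply: eq_bigr => j _; rewrite sumEFin.
rewrite ge0_integral_sum //; last 2 first.
- by move=> j; apply: emeasurable_sum => q; exact: mT.
- by move=> j x _; apply: sume_ge0 => q _; exact: T0.
rewrite (eq_big_nat _ _ (F2 := fun j => ((2 ^ (k - 1) * 2 ^ (n + 1 - k))%:R)%:E)) /=; last first.
  move=> j jk; move: jk; rewrite ?leq0n /= => jk.
  rewrite (ge0_integral_sum mu mD (fun q => mT j q) (fun q x _ => T0 j q x)).
  rewrite (eq_big_nat _ _ (F2 := fun q => ((2 ^ (k - 1 - j) * 2 ^ (n + 1 - k))%:R)%:E)) /=; last first.
    move=> q qj; move: qj; rewrite ?leq0n /= => qj.
    have hU := @Us_sub n k s j q jk kn qj (ltW s0) sL.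
    have hV : Vs s (2 ^ (n - k))%:R (bpt n j q) `<=` D.
      exact: subset_trans (@Vs_sub n k s j q jk kn qj hs) hU.
    rewrite /Tt int_term //; try (exact: measurable_itv).
    rewrite mu_oo; last lra.
    rewrite mu_cc; last by move: sL; rewrite (@lvl_len_k n k kn) natrM; lra.
    rewrite -!EFinM -EFinD; congr (_%:E).
    have -> : (n + 1 - k = (n - k).+1)%N by lia.
    rewrite /wt expnS !natrM; ring.
  have nM : forall (a b : nat), (a%:R *+ b = (a * b)%:R :> R) by move=> a b; rewrite natrM mulr_natr.
  rewrite sumEFin sumr_const_nat subn0 nM; congr (_%:R%:E).
  by rewrite mulnAC -expnD subnK //; lia.
rewrite sumEFin sumr_const_nat subn0 -expnD.
congr (_%:E); have -> : (k - 1 + (n + 1 - k) = n)%N by lia. by rewrite mulr_natl.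
Qed.
End I.

Lemma lvl_lenE n l : (l <= n.+1)%N -> (2 ^ l * lvl_len n l)%N = Npts n.
Proof. by move=> hl; rewrite /lvl_len /Npts -expnD subnKC. Qed.

Lemma lvl_len_gt0 n l : (0 < lvl_len n l)%N.
Proof. by rewrite /lvl_len expn_gt0. Qed.

Lemma odd_pow_inj q q' a a' : ((2 * q + 1) * 2 ^ a = (2 * q' + 1) * 2 ^ a')%N -> a = a' /\ q = q'.
Proof.
elim: a a' => [|a IH] [|a'] /=.
- rewrite !expn0 !muln1 => h; split => //; lia.
- rewrite expn0 muln1 expnS mulnCA => h; exfalso; move: h; set Y := (_ * 2 ^ a')%N; lia.
- rewrite expn0 muln1 expnS mulnCA => h; exfalso; move: h; set Y := (_ * 2 ^ a)%N; lia.
- rewrite !expnS => h; have [-> ->] : a = a' /\ q = q'.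
    by apply: IH; rewrite !mulnA ![(_ * 2)%N]mulnC -!mulnA in h; apply/eqP; rewrite -(eqn_pmul2l (isT : 0 < 2)%N); apply/eqP.
  by [].
Qed.

Lemma sum_le1 (r : seq nat) (t : nat -> nat) : uniq r -> (forall i, i \in r -> t i <= 1)%N ->
  (forall i i', i \in r -> i' \in r -> 0 < t i -> 0 < t i' -> i = i')%N -> (\sum_(i <- r) t i <= 1)%N.
Proof.
elim: r => [|a r IH] /=; first by rewrite big_nil.
move=> /andP[ar ur] t1 tu; rewrite big_cons.
have [ta|] := posnP (t a); last first.
  move=> ta; rewrite (big1_seq) ?addn0; first by apply: t1; rewrite mem_head.
  move=> i /andP[_ ir]; apply/eqP; rewrite -leqn0 leqNgt; apply/negP => ti.
  have ia := tu i a ltac:(by rewrite inE ir orbT) (mem_head _ _) ti ta.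
  by move: ar; rewrite -ia ir.
rewrite ta add0n; apply: IH => //.
  by move=> i ir; apply: t1; rewrite inE ir orbT.
by move=> i i' ir ir'; apply: tu; rewrite inE ?ir ?ir' orbT.
Qed.


Section S.
Variables (R : realType) (n alpha : nat).
Hypothesis halpha : (1 <= alpha)%N.
Let c := (2 ^ alpha + 1)%N.

Lemma tree_hit0 (x s : R) : 0 <= x -> x + s <= (Npts n)%:R -> tree_hit n 0 x s.
Proof.
move=> x0 xs; apply/existsP; exists ord0; rewrite /contains /tree_start /= mul0n add0r x0 /=.
by rewrite /lvl_len subn0.
Qed.

Lemma tree_depth_hit (x s : R) : tree_hit n 0 x s ->
  tree_hit n (tree_depth n x s) x s /\ (tree_depth n x s <= n.+1)%N.
Proof.
move=> h0; rewrite /tree_depth.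
case: (@eq_bigmax_cond _ [pred l : 'I_n.+2 | tree_hit n l x s] (fun l => val l)) => [|i0 Hi0 E].
  by apply/card_gt0P; exists ord0.
have -> : (\max_(l < n.+2 | tree_hit n l x s) (l : nat))%N = i0 by exact: E.
by split => //; rewrite -ltnS ltn_ord.
Qed.

Lemma FP_tree_eq (x s : R) : 0 <= x -> x + s <= (Npts n)%:R ->
  FP_tree n x s = lvl_len n (tree_depth n x s).
Proof.
move=> x0 xs; have [hd dle] := @tree_depth_hit x s (@tree_hit0 x s x0 xs).
rewrite /FP_tree; set d := tree_depth n x s in hd dle *.
case: pickP => [m _|H]; last first.
  by move: hd => /existsP[m hm]; move: (H m); rewrite hm.
apply: data_in_len; first by rewrite /tree_start.
rewrite /tree_start -natrD ler_nat -(@lvl_lenE n d dle).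
by have := ltn_ord m; nia.
Qed.

Lemma cE : (c - 1 = 2 * 2 ^ (alpha - 1))%N.
Proof. by rewrite /c addnK -expnS subn1 prednK. Qed.

Lemma dag_hit_half (x s : R) l p : (p <= 2 ^ l.+1 - 2)%N ->
  contains (p%:R * ((lvl_len n l)%:R / 2)) (lvl_len n l)%:R x s -> dag_hit n c l x s.
Proof.
move=> hp hc; apply/existsP.
have K0 : (0 < 2 ^ (alpha - 1))%N by rewrite expn_gt0.
have hm : (p * 2 ^ (alpha - 1) < dag_count c l)%N.
  rewrite /dag_count cE ltnS expnS in hp *; nia.
exists (Ordinal hm); rewrite /dag_start /=.
suff -> : (p * 2 ^ (alpha - 1))%:R * ((lvl_len n l)%:R / (c - 1)%:R) = p%:R * ((lvl_len n l)%:R / 2 :> R) by [].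
rewrite cE !natrM; field.
by rewrite pnatr_eq0 -lt0n.
Qed.

Lemma tree_dag_hit (x s : R) (l : nat) : tree_hit n l x s -> dag_hit n c l x s.
Proof.
move=> /existsP[m hm]; apply: (@dag_hit_half x s l (2 * m)).
  by have := ltn_ord m; rewrite expnS; lia.
suff <- : (m * lvl_len n l)%:R = (2 * m)%:R * ((lvl_len n l)%:R / 2 :> R) by [].
by rewrite !natrM; field.
Qed.

Lemma dag_depth_hit (x s : R) : dag_hit n c 0 x s ->
  dag_hit n c (dag_depth n c x s) x s /\ (dag_depth n c x s <= n.+1)%N.
Proof.
move=> h0; rewrite /dag_depth.
case: (@eq_bigmax_cond _ [pred l : 'I_n.+2 | dag_hit n c l x s] (fun l => val l)) => [|i0 Hi0 E].
  by apply/card_gt0P; exists ord0.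
have -> : (\max_(l < n.+2 | dag_hit n c l x s) (l : nat))%N = i0 by exact: E.
by split => //; rewrite -ltnS ltn_ord.
Qed.

Lemma FP_dag_eq (x s : R) : 0 <= x -> x + s <= (Npts n)%:R ->
  FP_dag n c x s = lvl_len n (dag_depth n c x s).
Proof.
move=> x0 xs; have [hd dle] := @dag_depth_hit x s (@tree_dag_hit x s 0 (@tree_hit0 x s x0 xs)).
rewrite /FP_dag; set d := dag_depth n c x s in hd dle *.
case: pickP => [m _|H]; last first.
  by move: hd => /existsP[m hm]; move: (H m); rewrite hm.
have K0 : (0 < 2 ^ (alpha - 1))%N by rewrite expn_gt0.
have LN := @lvl_lenE n d dle.
have L0 := lvl_len_gt0 n d.
have hc : dag_count c d = (2 * 2 ^ (alpha - 1) * 2 ^ d - 2 * 2 ^ (alpha - 1)).+1 by rewrite /dag_count cE.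
have hm : (m <= 2 * 2 ^ (alpha - 1) * 2 ^ d - 2 * 2 ^ (alpha - 1))%N by rewrite -ltnS -hc.
apply: data_in_len; rewrite /dag_start cE.
  by apply: mulr_ge0 => //; apply: divr_ge0.
have Q0 : (0 < (2 * 2 ^ (alpha - 1))%:R :> R) by rewrite ltr0n muln_gt0 K0.
have -> : m%:R * ((lvl_len n d)%:R / (2 * 2 ^ (alpha - 1))%:R) + (lvl_len n d)%:R
   = (m * lvl_len n d + 2 * 2 ^ (alpha - 1) * lvl_len n d)%:R / (2 * 2 ^ (alpha - 1))%:R :> R.
  rewrite natrD !natrM; field; by rewrite pnatr_eq0 -lt0n.
rewrite ler_pdivrMr // -natrM ler_nat -LN; nia.
Qed.

Lemma ratio_ge (x s : R) j l : 0 <= x -> x + s <= (Npts n)%:R -> (j <= n.+1)%N -> (l <= n.+1)%N ->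
  (tree_depth n x s <= j)%N -> dag_hit n c l x s ->
  (lvl_len n j)%:R / (lvl_len n l)%:R <= fp_ratio n c x s.
Proof.
move=> x0 xs jn ln td dh.
rewrite /fp_ratio (@FP_tree_eq x s x0 xs) (@FP_dag_eq x s x0 xs).
have lD : (l <= dag_depth n c x s)%N.
  by apply: (@leq_bigmax_cond _ (fun l : 'I_n.+2 => dag_hit n c l x s) (fun l => val l) (Ordinal (ln : l < n.+2)%N)).
have [_ Dn] := @dag_depth_hit x s (@tree_dag_hit x s 0 (@tree_hit0 x s x0 xs)).
have h1 : (lvl_len n j <= lvl_len n (tree_depth n x s))%N.
  by rewrite /lvl_len leq_pexp2l //; lia.
have h2 : (lvl_len n (dag_depth n c x s) <= lvl_len n l)%N.
  by rewrite /lvl_len leq_pexp2l //; lia.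
have p1 := lvl_len_gt0 n l; have p2 := lvl_len_gt0 n (dag_depth n c x s).
rewrite ler_pdivrMr ?ltr0n // mulrAC ler_pdivlMr ?ltr0n // -!natrM ler_nat.
exact: leq_mul.
Qed.

Lemma ratio_ge1 (x s : R) : 0 <= x -> x + s <= (Npts n)%:R -> 1 <= fp_ratio n c x s.
Proof.
move=> x0 xs; have [th tn] := @tree_depth_hit x s (@tree_hit0 x s x0 xs).
have := @ratio_ge x s _ _ x0 xs tn tn (leqnn _) (@tree_dag_hit x s _ th).
by rewrite divff // pnatr_eq0 -lt0n lvl_len_gt0.
Qed.

Lemma lvl_div j l : (j <= l)%N -> (l <= n.+1)%N ->
  (lvl_len n j)%:R / (lvl_len n l)%:R = (2 ^ (l - j))%:R :> R.
Proof.
move=> jl ln; have -> : lvl_len n j = (2 ^ (l - j) * lvl_len n l)%N.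
  by rewrite /lvl_len -expnD; f_equal; lia.
by rewrite natrM mulfK // pnatr_eq0 -lt0n lvl_len_gt0.
Qed.

Lemma tree_depth_le (x s : R) j P : (j <= n)%N ->
  x < (P * 2 ^ (n - j))%:R -> (P * 2 ^ (n - j))%:R < x + s -> (tree_depth n x s <= j)%N.
Proof.
move=> jn h1 h2; apply/bigmax_leqP => l /existsP[m /andP[m1 m2]].
rewrite leqNgt; apply/negP => jl.
have lE : (2 ^ (n - j) = 2 ^ (l.-1 - j) * lvl_len n l)%N.
  by rewrite /lvl_len -expnD; f_equal; have := ltn_ord l; lia.
rewrite /tree_start lE mulnA in h1 h2 m1 m2.
have a1 : (m * lvl_len n l < P * 2 ^ (l.-1 - j) * lvl_len n l)%N.
  by rewrite -(ltr_nat R); apply: le_lt_trans m1 h1.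
have a2 : (P * 2 ^ (l.-1 - j) * lvl_len n l < m.+1 * lvl_len n l)%N.
  by rewrite -(ltr_nat R) mulSn natrD addrC; apply: lt_le_trans h2 m2.
rewrite ltn_pmul2r ?lvl_len_gt0 // in a1; rewrite ltn_pmul2r ?lvl_len_gt0 // in a2.
lia.
Qed.
Lemma nat_aux r k : (1 <= r)%N -> (r <= 2 ^ k - 1)%N -> (2 * r - 1 <= 2 ^ k.+1 - 2)%N.
Proof. rewrite expnS; lia. Qed.

Lemma aux_r r K : (1 <= r)%N -> (r <= K - 1)%N -> (r - 1 <= K - 2)%N /\ (1 <= 2 * r)%N.
Proof. move=> *; split; lia. Qed.

Lemma aux_exp a b : (a <= b)%N -> (a.+1 + (b - a) = b.+1)%N.
Proof. lia. Qed.

Lemma sum_pos_ex (r : seq nat) (f : nat -> nat) :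
  (0 < \sum_(i <- r) f i)%N -> exists2 i, i \in r & (0 < f i)%N.
Proof.
elim: r => [|a r IH]; rewrite ?big_nil ?big_cons //.
case: (posnP (f a)) => [fa|fa _]; last by exists a; rewrite ?mem_head.
by rewrite fa add0n => /IH [i ir fi]; exists i => //; rewrite inE ir orbT.
Qed.

Lemma Tt_le (k j q : nat) (s x : R) : (1 <= k)%N -> (k <= n)%N -> (j < k)%N -> (q < 2 ^ j)%N ->
  0 < s -> s <= (lvl_len n k)%:R -> (2 ^ (n - k))%:R < s ->
  0 <= x -> x + s <= (Npts n)%:R ->
  Tt R n k s j q x <= fp_ratio n c x s *
     ((bpt R n j q - s < x) && (x < bpt R n j q))%:R.
Proof.
move=> k1 kn jk qj.
have f1 : (j <= n)%N by lia.
have f2 : (j <= n.+1)%N by lia.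
have f3 : (k <= n.+1)%N by lia.
have f4 : (k - 1 <= n.+1)%N by lia.
have f5 : (j <= k - 1)%N by lia.
have f6 : ((k - 1).+1 = k)%N by lia.
have f7 : (n.+1 - (k - 1) = (n.+1 - k).+1)%N by lia.
have f8 : ((k - 1 - j).+1 = k - j)%N by lia.
have f9 : (n - j = (k - 1 - j) + (n - k).+1)%N by lia.
have f10 : (j.+1 + (k - 1 - j) = k)%N by lia.
move=> s0 sL hs x0 xs.
have r1 := @ratio_ge1 x s x0 xs.
rewrite /Tt !indicE /Us /Vs !mem_setE !in_itv /=.
case: (boolP ((bpt R n j q - s < x) && (x < bpt R n j q))) => [/andP[u1 u2]|hU]; last first.
  have -> : (bpt R n j q - (2 ^ (n - k))%:R <= x <= bpt R n j q + (2 ^ (n - k))%:R - s) = false.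
    apply/negbTE; apply: contra hU => /andP[v1 v2]; apply/andP; split; lra.
  by rewrite !mulr0 addr0.
rewrite mulr1.
set r0 := ((2 * q + 1) * 2 ^ (k - 1 - j))%N.
have LkE := @lvl_len_k n k kn.
have bE : bpt R n j q = r0%:R * (lvl_len n k)%:R.
  by rewrite /bpt /r0 -natrM LkE -expnS -mulnA -expnD -f9.
have r0pos : (1 <= r0)%N by rewrite /r0 muln_gt0 expn_gt0 addn1.
have r0le : (r0 <= 2 ^ k - 1)%N.
  have e : (2 ^ j.+1 * 2 ^ (k - 1 - j) = 2 ^ k)%N by rewrite -expnD f10.
  rewrite expnS in e; rewrite /r0; have := expn_gt0 2 (k - 1 - j); nia.
clearbody r0.
have [g1 g2] := @aux_r r0 (2 ^ k) r0pos r0le.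
have td : (tree_depth n x s <= j)%N.
  apply: (@tree_depth_le x s j (2 * q + 1)); first exact: f1.
    by rewrite -/(bpt R n j q).
  by rewrite -/(bpt R n j q); lra.
have L0 : (0 < (lvl_len n k)%:R :> R) by rewrite ltr0n lvl_len_gt0.
have h2 : forall y : R, 2 * y / 2 = y by move=> y; field.
have dk1 : dag_hit n c (k - 1) x s.
  apply: (@dag_hit_half x s (k - 1) (r0 - 1)).
    by rewrite f6.
  have -> : lvl_len n (k - 1) = (2 * lvl_len n k)%N.
    by rewrite /lvl_len -expnS f7.
  rewrite /contains natrM natrB // h2.
  rewrite bE mulrBl mul1r in u1 u2 *; move: u1 u2 sL.
  set P := r0%:R * _; move=> u1 u2 sL'; apply/andP; split; lra.
case: (boolP (_ <= x <= _)) => [/andP[v1 v2]|hV].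
  have dk : dag_hit n c k x s.
    apply: (@dag_hit_half x s k (2 * r0 - 1)).
      exact: nat_aux.
    rewrite /contains (natrB _ g2).
    rewrite natrM LkE natrM h2.
    move: v1 v2 sL; rewrite bE LkE natrM => v1 v2 sL'.
    have e : ((2 * r0%:R - 1) * (2 ^ (n - k))%:R = r0%:R * (2 * (2 ^ (n - k))%:R) - (2 ^ (n - k))%:R :> R) by ring.
    rewrite e; move: v1 v2 sL'; set P := r0%:R * _; set H := (2 ^ (n - k))%:R.
    move=> v1 v2 sL'; apply/andP; split; lra.
  have := @ratio_ge x s j k x0 xs f2 f3 td dk.
  rewrite lvl_div; [|exact: ltnW|exact: f3].
  rewrite /wt (_ : true%:R = 1 :> R) // !mulr1 -natrD addnn -mul2n -expnS.
  by rewrite f8.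
have := @ratio_ge x s j (k - 1) x0 xs f2 f4 td dk1.
rewrite lvl_div; [|exact: f5|exact: f4].
rewrite /wt (_ : true%:R = 1 :> R) // (_ : false%:R = 0 :> R) // mulr0 addr0 mulr1.
by [].
Qed.

Lemma bptE k j q : (j < k)%N -> (k <= n)%N ->
  bpt R n j q = (((2 * q + 1) * 2 ^ (k - 1 - j))%N)%:R * (lvl_len n k)%:R.
Proof.
move=> jk kn; rewrite /bpt -natrM (@lvl_len_k n k kn) -expnS -mulnA -expnD.
congr ((_ * 2 ^ _)%:R); lia.
Qed.

Lemma gf_le (k : nat) (s x : R) : (1 <= k)%N -> (k <= n)%N ->
  0 < s -> s <= (lvl_len n k)%:R -> (2 ^ (n - k))%:R < s ->
  0 <= x -> x + s <= (Npts n)%:R -> gf R n k s x <= fp_ratio n c x s.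
Proof.
move=> k1 kn s0 sL hs x0 xs.
have r1 := @ratio_ge1 x s x0 xs.
set r := fp_ratio n c x s in r1 *.
set I := fun j q => ((bpt R n j q - s < x) && (x < bpt R n j q)).
apply: (@le_trans _ _ (\sum_(0 <= j < k) \sum_(0 <= q < 2 ^ j) r * (I j q)%:R)).
  rewrite /gf; apply: ler_sum_nat => j /andP[_ jk]; apply: ler_sum_nat => q /andP[_ qj].
  exact: Tt_le.
have -> : \sum_(0 <= j < k) \sum_(0 <= q < 2 ^ j) r * (I j q)%:R
    = r * (\sum_(0 <= j < k) \sum_(0 <= q < 2 ^ j) (I j q : nat))%:R.
  by rewrite natr_sum mulr_sumr; apply: eq_bigr => j _; rewrite natr_sum mulr_sumr.
rewrite -[X in _ <= X]mulr1; apply: ler_wpM2l; first lra.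
rewrite (_ : 1 = 1%:R :> R) // ler_nat.
have L0 : (0 < (lvl_len n k)%:R :> R) by rewrite ltr0n lvl_len_gt0.
have key : forall j q j' q', (j < k)%N -> (j' < k)%N -> I j q -> I j' q' ->
    (((2 * q + 1) * 2 ^ (k - 1 - j)) <= ((2 * q' + 1) * 2 ^ (k - 1 - j')))%N.
  move=> j q j' q' jk jk' /andP[u1 u2] /andP[u1' u2'].
  rewrite leqNgt; apply/negP.
  rewrite !(@bptE k) // in u1 u2 u1' u2'.
  move: u1 u2 u1' u2'.
  move: (((2 * q + 1) * 2 ^ (k - 1 - j)))%N (((2 * q' + 1) * 2 ^ (k - 1 - j')))%N => a b u1 u2 u1' u2' lt.
  have lt2 : ((b + 1)%:R <= a%:R :> R) by rewrite ler_nat addn1.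
  rewrite natrD in lt2.
  have : (b%:R + 1) * (lvl_len n k)%:R <= a%:R * (lvl_len n k)%:R :> R.
    by apply: ler_wpM2r => //; lra.
  move: u1 u2 u1' u2'; set A := a%:R * _; set B := b%:R * _ => u1 u2 u1' u2'.
  rewrite mulrDl mul1r -/B; lra.
have uniqI : forall j q j' q', (j < k)%N -> (j' < k)%N -> I j q -> I j' q' -> j = j' /\ q = q'.
  move=> j q j' q' jk jk' h h'.
  have := key _ _ _ _ jk jk' h h'; have := key _ _ _ _ jk' jk h' h.
  move=> a b; have /odd_pow_inj [e ->] : ((2 * q + 1) * 2 ^ (k - 1 - j) = (2 * q' + 1) * 2 ^ (k - 1 - j'))%N.
    by apply/eqP; rewrite eqn_leq a b.
  by split => //; lia.
apply: sum_le1; first by rewrite /index_iota; exact: iota_uniq.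
- move=> j; rewrite mem_index_iota => /andP[_ jk].
  apply: sum_le1; first by rewrite /index_iota; exact: iota_uniq.
    by move=> q _; exact: leq_b1.
  move=> q q' _ _; rewrite !lt0b => h h'.
  by have [] := uniqI _ _ _ _ jk jk h h'.
- move=> j j'; rewrite !mem_index_iota => /andP[_ jk] /andP[_ jk'].
  move=> /sum_pos_ex [q _ h] /sum_pos_ex [q' _ h'].
  rewrite lt0b in h; rewrite lt0b in h'.
  by have [] := uniqI _ _ _ _ jk jk' h h'.
Qed.

Lemma ratio_one (i : nat) : (i < Npts n)%N -> fp_ratio n c (i%:R : R) 1 = 1.
Proof.
move=> iN.
have x0 : (0 : R) <= i%:R by [].
have xs : (i%:R : R) + 1 <= (Npts n)%:R by rewrite natr1 ler_nat.
have r1 := @ratio_ge1 _ _ x0 xs.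
apply/eqP; rewrite eq_le r1 andbT.
rewrite /fp_ratio (@FP_tree_eq _ _ x0 xs) (@FP_dag_eq _ _ x0 xs).
have [_ tn] := @tree_depth_hit _ _ (@tree_hit0 _ _ x0 xs).
have -> : tree_depth n (i%:R : R) 1 = n.+1.
  apply/eqP; rewrite eqn_leq tn /=.
  have hit : tree_hit n n.+1 (i%:R : R) 1.
    apply/existsP; exists (Ordinal iN); rewrite /contains /tree_start /lvl_len subnn expn0 muln1 /=.
    by rewrite lexx /= lexx.
  exact: (@leq_bigmax_cond _ (fun l : 'I_n.+2 => tree_hit n l (i%:R : R) 1) (fun l => val l) ord_max hit).
rewrite /lvl_len subnn expn0 ler_pdivrMr ?ltr0n ?expn_gt0 // mul1r.
by rewrite (_ : 1 = 1%:R :> R) // ler_nat expn_gt0.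
Qed.

Lemma part1 : expect_I1 (R := R) n c = 1.
Proof.
rewrite /expect_I1 (eq_bigr (fun=> 1)); last by move=> i _; exact: ratio_one.
rewrite sumr_const card_ord -[X in _ * X]mulr_natr mul1r mulVf //.
by rewrite pnatr_eq0 /Npts expn_eq0.
Qed.

Lemma part2 (s : R) : 1 < s -> s <= (Npts n)%:R ->
  ((Num.max 1 ((Num.floor (ln ((Npts n)%:R / s) / ln 2))%:~R / 2))%:E <= expect_Is n c s)%E.
Proof.
move=> s1 sN.
set N : R := (Npts n)%:R in sN *.
have s0 : 0 < s by lra.
have N0 : 0 < N by lra.
have ln2 : 0 < ln (2 : R) by rewrite ln_gt0 // ltr1n.
have Ns1 : 1 <= N / s by rewrite ler_pdivlMr // mul1r.
have Ns0 : 0 < N / s by lra.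
set k := Num.floor (ln (N / s) / ln 2).
have k0 : 0 <= k by rewrite floor_ge0; apply: divr_ge0; [exact: ln_ge0|exact: ltW].
have [kn kE] : exists kn : nat, k = kn%:Z by exists `|k|%N; rewrite gez0_abs.
have kR : (k%:~R : R) = kn%:R by rewrite kE.
have [fl fu] : (k%:~R <= ln (N / s) / ln 2) /\ (ln (N / s) / ln 2 < (k + 1)%:~R).
  by have /andP[] := floor_itv (ln (N / s) / ln 2).
rewrite kR in fl; rewrite kE rmorphD /= in fu.
have p2 : 0 < (2 : R) ^+ kn by rewrite exprn_gt0.
have p2' : 0 < (2 : R) ^+ kn.+1 by rewrite exprn_gt0.
have fl' : kn%:R * ln 2 <= ln (N / s) by rewrite -ler_pdivlMr.
have fu' : ln (N / s) < (kn%:R + 1) * ln 2 by rewrite -ltr_pdivrMr.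
have low : (2 : R) ^+ kn * s <= N.
  rewrite -ler_pdivlMr // -ler_ln ?posrE // (lnXn kn) //.
  by move: fl'; rewrite mulr_natl.
have up : N < (2 : R) ^+ kn.+1 * s.
  rewrite -ltr_pdivrMr // -ltr_ln ?posrE // (lnXn kn.+1) //.
  by move: fu'; rewrite natr1 mulr_natl.
rewrite /expect_Is.
case: eqP => [sNe|sNe].
  have kn0 : kn = 0%N.
    move: low; rewrite sNe -[X in _ <= X]mul1r ler_pM2r // => h.
    have h' : (2 ^ kn <= 1)%N by rewrite -(ler_nat R) natrX.
    by apply/eqP; move: h'; rewrite -[1%N](expn0 2) leq_exp2l // leqn0.
  rewrite kR kn0 mul0r (max_l ler01) lee_fin.
  apply: ratio_ge1 => //; lra.
have sN' : s < N by rewrite lt_neqAle sN andbT; apply/eqP.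
set D := `[0%R, (N - s)%R]%classic.
have Ds0 : 0 < N - s by lra.
have muD : lebesgue_measure D = (N - s)%:E by rewrite mu_cc; [rewrite subr0|lra].
have hr : forall x, D x -> 0 <= x /\ x + s <= N.
  by move=> x; rewrite /D /= in_itv /= => /andP[a b]; split; lra.
suff H : (((N - s) * Num.max 1 (k%:~R / 2))%:E <=
           \int[lebesgue_measure]_(x in D) (fp_ratio n c x s)%:E)%E.
  apply: le_trans (_ : (((N - s)^-1 * ((N - s) * Num.max 1 (k%:~R / 2)))%:E <= _)%E).
    by rewrite mulKf // gt_eqF.
  rewrite EFinM; apply: lee_wpmul2l => //; rewrite lee_fin invr_ge0; lra.
rewrite kR.
have [h|h] := leP (kn%:R / 2 : R) 1.
  rewrite mulr1.
  apply: le_trans (_ : (\int[lebesgue_measure]_(x in D) (1 * \1_D x)%:E <= _)%E).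
    rewrite int_wind //; try exact: measurable_itv.
    rewrite /D mu_cc; last lra.
    rewrite -EFinM lee_fin; lra.
  apply: le_int_nm => x Dx; first by rewrite lee_fin mulr_ge0.
  have [a b] := hr x Dx; rewrite lee_fin mul1r indicE mem_set //; exact: ratio_ge1.

have kn1 : (1 <= kn)%N.
  rewrite lt0n; apply/eqP => k0'; move: h; rewrite k0' mul0r; lra.
have NE : N = 2 * (2 ^ n)%:R by rewrite /N /Npts expnS natrM.
have knn : (kn <= n)%N.
  have : (2 : R) ^+ kn < N.
    apply: lt_le_trans low; rewrite ltr_pMr //.
  rewrite /N /Npts -natrX ltr_nat ltn_exp2l //.
have LE := @lvl_lenE n kn (leq_trans knn (leqnSn _)).
have sL : s <= (lvl_len n kn)%:R.
  have : (2 ^ kn)%:R * (lvl_len n kn)%:R = N :> R by rewrite -natrM LE.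
  rewrite natrX => e; rewrite -e in low; rewrite -(ler_pM2l p2) //.
have hs : (2 ^ (n - kn))%:R < s.
  have : (2 ^ kn.+1)%:R * (2 ^ (n - kn))%:R = N :> R.
    by rewrite -natrM -expnD (@aux_exp kn n knn).
  rewrite natrX => e; rewrite -e in up; rewrite -(ltr_pM2l p2') //.
apply: le_trans (_ : (\int[lebesgue_measure]_(x in D) (gf R n kn s x)%:E <= _)%E); last first.
  apply: le_int_nm => x Dx.
    rewrite lee_fin /gf; apply: sumr_ge0 => j _; apply: sumr_ge0 => q _.
    by rewrite /Tt addr_ge0 // mulr_ge0.
  have [a b] := hr x Dx; rewrite lee_fin; exact: gf_le.
rewrite int_gf // lee_fin NE.
have : (0 : R) <= kn%:R by [].
move: (kn%:R : R) (2 ^ n)%:R => K P K0; nra.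
Qed.


End S.

Local Close Scope classical_set_scope.

Theorem theorem3 (R : realType) (n alpha : nat) (halpha : (1 <= alpha)%N) :
  let N : R := (Npts n)%:R in
  let c : nat := (2 ^ alpha + 1)%N in
  expect_I1 (R := R) n c = 1 /\
  (forall s : R, 1 < s -> s <= N ->
     ((Num.max 1 ((Num.floor (ln (N / s) / ln 2))%:~R / 2))%:E <= expect_Is n c s)%E).
Proof.
move=> N c; split; first exact: (@part1 R n alpha halpha).
move=> s s1 sN; exact: (@part2 R n alpha halpha s s1 sN).
Qed.
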